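(* Let $G$ be a graph. For any two maximum matchings $F, F'$ of $G$ we have $\nu(G\setminus F')\le 2\,\nu(G\setminus F)$. Consequently $L(G)\le 2\,l(G)$.
   Context: Graphs are finite, undirected, without loops or multiple edges. $\nu(G)$ denotes the maximum size of a matching of $G$; a matching is maximum if it has $\nu(G)$ edges. For $F\subseteq E(G)$, $G\setminus F$ is the graph with vertex set $V(G)$ and edge set $E(G)\setminus F$. Define $L(G)=\max\{\nu(G\setminus F): F \text{ a maximum matching of } G\}$ and $l(G)=\min\{\nu(G\setminus F): F \text{ a maximum matching of } G\}$. *)

(* Defs.v *)
(* A finite simple graph on the vertex type T is given by its
   edge set E : {set {set T}}, every edge being a 2-element subset of T. *)
From mathcomp Require Import all_boot.
Set Implicit Arguments. Unset Strict Implicit. Unset Printing Implicit Defensive.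

Section Matching.
Variable T : finType.

Definition simple_graph (E : {set {set T}}) : bool :=
  [forall A in E, #|A| == 2].

Definition is_matching (E M : {set {set T}}) : bool :=
  (M \subset E) &&
  [forall A in M, forall B in M, (A != B) ==> [disjoint A & B]].

Definition nu (E : {set {set T}}) : nat :=
  \max_(M : {set {set T}} | is_matching E M) #|M|.

Definition max_matching (E M : {set {set T}}) : bool :=
  is_matching E M && (#|M| == nu E).

(* G \ F has the same vertices and edge set E :\: F. *)
Definition Lmax (E : {set {set T}}) : nat :=
  \max_(F : {set {set T}} | max_matching E F) nu (E :\: F).

(* l(G) = min { nu(G \ F) : F maximum matching of G }.  The set of maximum
   matchings is nonempty, and all values are <= #|E|, so #|E| is a neutral
   starting value for the iterated minimum. *)
Definition lmin (E : {set {set T}}) : nat :=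
  \big[minn/#|E|]_(F : {set {set T}} | max_matching E F) nu (E :\: F).
End Matching.

(* Main.v *)
Require Import Defs.
From mathcomp Require Import all_boot.

Set Implicit Arguments.
Section S.
Variable T : finType.
Implicit Types E M N : {set {set T}}.

Lemma match_sub E E' M N : is_matching E M -> N \subset M -> N \subset E' ->
  is_matching E' N.
Proof.
case/andP=> _ /forallP H sNM sNE; rewrite /is_matching sNE /=.
apply/forallP=> A; apply/implyP=> AN; apply/forallP=> B; apply/implyP=> BN.
have := H A; rewrite (subsetP sNM _ AN) /= => /forallP /(_ B).
by rewrite (subsetP sNM _ BN).
Qed.

Arguments match_sub [E E' M N].
Lemma le_nu E M : is_matching E M -> #|M| <= nu E.
Proof. by move=> HM; rewrite /nu (leq_bigmax_cond _ HM). Qed.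

Lemma nu_ex E : exists2 M, is_matching E M & nu E = #|M|.
Proof.
have H0 : is_matching E set0.
  by rewrite /is_matching sub0set; apply/forallP=> A; rewrite in_set0.
have [|M HM HE] := @eq_bigmax_cond _ (fun M => is_matching E M) (fun M => #|M|).
  by apply/card_gt0P; exists set0.
by exists M => //; rewrite -HE.
Qed.

Lemma nu_le E : nu E <= #|E|.
Proof.
have [M /andP[sME _] ->] := nu_ex E; exact: subset_leq_card.
Qed.

Lemma part1 E F F' : max_matching E F -> max_matching E F' ->
  nu (E :\: F') <= 2 * nu (E :\: F).
Proof.
case/andP=> mF /eqP cF; case/andP=> mF' /eqP cF'.
have [M mM ->] := nu_ex (E :\: F').
have sME : M \subset E :\: F' by case/andP: mM.
have h1 : #|M :\: F| <= nu (E :\: F).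
  apply: le_nu; apply: (match_sub mM (subsetDl _ _)).
  by apply: setSD; apply: subset_trans sME (subsetDl _ _).
have h2 : #|F' :\: F| <= nu (E :\: F).
  apply: le_nu; apply: (match_sub mF' (subsetDl _ _)).
  by apply: setSD; case/andP: mF'.
have h3 : #|M :&: F| <= #|F :\: F'|.
  apply: subset_leq_card; apply/subsetP=> A; rewrite !inE => /andP[AM AF].
  by rewrite AF andbT; have := subsetP sME A AM; rewrite !inE => /andP[].
have h4 : #|F :\: F'| = #|F' :\: F|.
  have e1 := cardsID F' F; have e2 := cardsID F F'.
  rewrite setIC cF' -cF in e2; move: e1 e2 => <- /eqP.
  by rewrite eqn_add2l => /eqP.
rewrite -(cardsID F M) mul2n -addnn addnC; apply: leq_add => //.
by rewrite -h4 in h2; apply: leq_trans h3 h2.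
Qed.

End S.

Theorem theorem2 (T : finType) (E : {set {set T}}) :
  simple_graph E ->
  (forall F F' : {set {set T}}, max_matching E F -> max_matching E F' ->
     nu (E :\: F') <= 2 * nu (E :\: F)) /\
  Lmax E <= 2 * lmin E.
Proof.
move=> _; split; first exact: part1.
apply/bigmax_leqP=> F' HF'; rewrite /lmin.
elim/big_ind: _ => //.
- apply: leq_trans (nu_le _) _; rewrite mul2n -addnn.
  apply: leq_trans (subset_leq_card (subsetDl E F')) _; exact: leq_addr.
- move=> x y hx hy; rewrite /minn; by case: ifP.
- by move=> F HF; apply: part1.
Qed.
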